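(* Let $G$ be a 2-arc-colored directed multigraph. If $G$ is PC trail-connected, then there is no PC circuit which is bad in $G$.
   Context: $G$ has an arbitrary arc coloring $\phi:A(G)\to\{1,2\}$. Trails are directed walks without repeated arcs; a trail is properly colored (PC) if consecutive arcs have different colors (and, if closed, also the last and first arcs). $G$ is PC trail-connected if for every ordered pair of arcs $f_1,f_2$ there is a PC trail starting with arc $f_1$ and ending with arc $f_2$. A (multi)digraph is PC Euler if it has a PC closed trail containing all its arcs. A PC circuit is a subgraph $C$ of $G$ that is PC Euler with $d^+_{1,C}(v)\le 1$ and $d^+_{2,C}(v)\le1$ for all $v\in V(C)$ ($d^+_{i,H}(v)$ = number of arcs of color $i$ in $H$ leaving $v$). For a subgraph $C$, $G-C$ is obtained by deleting the arcs of $C$; connected components are those of the underlying undirected graph. A PC circuit $C$ is bad in $G$ if there is a connected component $D$ of $G-C$ such that $\max\{d^+_{1,C\cup D}(v),d^+_{2,C\cup D}(v)\}=1$ for every vertex $v\in V(C)\cap V(D)$. *)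

(* Defs.v *)
From mathcomp Require Import all_boot.
Set Implicit Arguments. Unset Strict Implicit. Unset Printing Implicit Defensive.

(* A 2-arc-colored directed multigraph: finite vertex type V, finite arc type
   A (parallel arcs allowed), tail/head maps, colouring col : A -> bool
   (false = colour 1, true = colour 2).  Subgraphs are given by arc sets. *)
Section PC.
Variables (V A : finType) (tl hd : A -> V) (col : A -> bool).

Definition pc_step (e f : A) : bool := (hd e == tl f) && (col e != col f).

Definition pc_trail (s : seq A) : bool :=
  if s is x :: s' then path pc_step x s' && uniq s else false.

Definition pc_closed_trail (s : seq A) : bool :=
  if s is x :: s' then pc_trail s && pc_step (last x s') x else false.

Definition pc_trail_connected : Prop :=
  forall f1 f2 : A, exists s : seq A,
    [/\ pc_trail s, head f1 s = f1 /\ s <> [::] & last f1 s = f2].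

Definition pc_euler (X : {set A}) : Prop :=
  exists s : seq A, pc_closed_trail s /\ (forall e, (e \in s) = (e \in X)).

Definition outdeg (X : {set A}) (i : bool) (v : V) : nat :=
  #|[set e in X | (tl e == v) && (col e == i)]|.

Definition vset (X : {set A}) : {set V} :=
  [set v | [exists e in X, (tl e == v) || (hd e == v)]].

Definition pc_circuit (C : {set A}) : Prop :=
  pc_euler C /\ forall v, v \in vset C -> outdeg C false v <= 1 /\ outdeg C true v <= 1.

Definition arc_adj (H : {set A}) : rel A := fun e f =>
  [&& e \in H, f \in H &
      [|| tl e == tl f, tl e == hd f, hd e == tl f | hd e == hd f]].

(* D is (the arc set of) a connected component of the underlying undirected
   graph of G - C (deleting the arcs of C); components are taken with their
   arcs, i.e. components consisting of an isolated vertex are not counted. *)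
Definition component_of_minus (C D : {set A}) : Prop :=
  exists2 e, e \in ~: C & D = [set f | connect (arc_adj (~: C)) e f].

Definition bad (C : {set A}) : Prop :=
  pc_circuit C /\
  exists D, component_of_minus C D /\
    forall v, v \in vset C :&: vset D ->
      maxn (outdeg (C :|: D) false v) (outdeg (C :|: D) true v) = 1.
End PC.

(* Main.v *)
Require Import Defs.
From mathcomp Require Import all_boot.

Lemma path_cross (T : Type) (r : rel T) (P : pred T) x p :
  path r x p -> ~~ P x -> P (last x p) -> exists y z, [/\ r y z, ~~ P y & P z].
Proof.
elim: p x => [|y p IH] x /=.
  by move=> _ nx px; rewrite px in nx.
move/andP=> [rxy pp] nx.
case Py: (P y); first by exists x, y; rewrite Py.
by apply: IH => //; rewrite Py.
Qed.

Theorem lemma3 (V A : finType) (tl hd : A -> V) (col : A -> bool) :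
  (forall a : A, tl a != hd a) ->
  pc_trail_connected tl hd col ->
  ~ exists C : {set A}, bad tl hd col C.
Proof.
move=> _ Hconn [C [[[s [Hs Hmem]] _] [D [[e eC ->] Hdeg]]]].
case: s Hs Hmem => [//|x s'] Hs Hmem.
have xC : x \in C by rewrite -Hmem mem_head.
have Hcl : closed (arc_adj tl hd (~: C)) (mem (~: C)).
  move=> u w /and3P [uC wC _]. by rewrite /= uC wC.
have inC f : connect (arc_adj tl hd (~: C)) e f -> f \in ~: C.
  by move=> Hf; rewrite -(closed_connect Hcl Hf).
have [t [Ht [ht nt] lt]] := Hconn x e.
case: t Ht ht nt lt => [//|y t'] /= /andP [Hp _] hy _ lt.
subst y.
have nPx : ~~ connect (arc_adj tl hd (~: C)) e x.
  by apply/negP => H; move: (inC _ H); rewrite inE xC.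
have [b [a [Hba nPb Pa]]] := @path_cross _ _ (fun f => connect (arc_adj tl hd (~: C)) e f) _ _
   Hp nPx (etrans (f_equal _ lt) (connect0 _ e)).
have aC := inC _ Pa.
have bC : b \in C.
  apply/negPn/negP => nb.
  move/negP: nPb; apply; apply: connect_trans Pa (connect1 _).
  rewrite /arc_adj aC inE nb /=.
  by case/andP: Hba => /eqP -> _; rewrite eqxx /= orbT.
have Hcyc : cycle (pc_step tl hd col) (x :: s').
  rewrite /cycle rcons_path.
  by move: Hs; rewrite /pc_closed_trail /pc_trail => /andP [/andP [-> _] ->].
have bs : b \in x :: s' by rewrite Hmem.
have Hb' := next_cycle Hcyc bs.
set b' := next (x :: s') b in Hb'.
have b'C : b' \in C by rewrite -Hmem mem_next.
move: Hba Hb'; rewrite /pc_step => /andP [/eqP hba cba] /andP [/eqP hbb cbb].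
have cab : col b' = col a.
  by move: cba cbb; case: (col a); case: (col b); case: (col b').
have nab : a != b'.
  by apply/eqP => E; move: aC; rewrite inE E b'C.
have := Hdeg (hd b).
have Hv : hd b \in vset tl hd C :&: vset tl hd [set f | connect (arc_adj tl hd (~: C)) e f].
  rewrite inE; apply/andP; split; rewrite /vset inE; apply/existsP.
    by exists b; rewrite bC eqxx orbT.
  by exists a; rewrite inE Pa hba eqxx.
move/(_ Hv) => Hm.
have H2 : 1 < outdeg tl col (C :|: [set f | connect (arc_adj tl hd (~: C)) e f]) (col a) (hd b).
  rewrite /outdeg.
  apply: leq_trans (subset_leq_card (_ : [set a; b'] \subset _)).
    by rewrite cards2 nab.
  apply/subsetP => z; rewrite !inE => /orP [/eqP ->|/eqP ->].
    by rewrite Pa orbT hba !eqxx.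
  by rewrite b'C hbb cab !eqxx.
move: H2 Hm; case: (col a) => H2 Hm.
  by move: (leq_maxr (outdeg tl col (C :|: [set f | connect (arc_adj tl hd (~: C)) e f]) false (hd b)) (outdeg tl col (C :|: [set f | connect (arc_adj tl hd (~: C)) e f]) true (hd b))); rewrite Hm leqNgt H2.
by move: (leq_maxl (outdeg tl col (C :|: [set f | connect (arc_adj tl hd (~: C)) e f]) false (hd b)) (outdeg tl col (C :|: [set f | connect (arc_adj tl hd (~: C)) e f]) true (hd b))); rewrite Hm leqNgt H2.
Qed.
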